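(* Let $S$ be a finite set of templates over schema $\mathbf{S}_E$ that have equality, and let $g\ge0$. If $\mathrm{coCSP}(S)$ is DLog-rewritable on instances of girth exceeding $g$, then it is DLog-rewritable.
   Context: Instances are finite sets of facts over a schema; a template is an instance. For a finite set $S$ of templates over $\mathbf{S}_E$, $\mathrm{coCSP}(S)$ is the Boolean query true on an $\mathbf{S}_E$-instance $I$ iff $I$ has no homomorphism to any $T\in S$. A template $T$ has equality if $\mathbf{S}_E$ contains a distinguished binary relation $\mathrm{eq}$ and $T$ interprets it as $\{(a,a)\mid a\in\mathrm{adom}(T)\}$. Girth: an instance has a cycle of length $n>0$ if it contains distinct facts $R_0(\mathbf{a}_0),\dots,R_{n-1}(\mathbf{a}_{n-1})$, $\mathbf{a}_i=a_{i,1}\cdots a_{i,m_i}$, and positions $p_i\neq p_i'$ of $R_i$ with $a_{i,p_i'}=a_{i\oplus1,p_{i\oplus1}}$ ($\oplus$ mod $n$); the girth is the length of a shortest cycle, $\omega$ if none. A Boolean Datalog program over EDB schema $\mathbf{S}_E$ is a finite set of rules $P(\mathbf{x})\leftarrow R_1(\mathbf{y}_1)\wedge\dots\wedge R_n(\mathbf{y}_n)$ (head variables in body) with a nullary goal relation not in bodies; head relations are IDB, the others from $\mathbf{S}_E$; $I\models\Gamma$ iff $\Gamma\cup I\models\mathrm{goal}()$. $\Gamma$ is a DLog-rewriting of $\mathrm{coCSP}(S)$ on instances of girth exceeding $g$ if $I\models\Gamma$ iff $\mathrm{coCSP}(S)$ is true on $I$ for every $\mathbf{S}_E$-instance $I$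 of girth $>g$; DLog-rewritable means this holds for all $\mathbf{S}_E$-instances for some $\Gamma$. *)

(* Defs.v *)
From Stdlib Require Import List Arith.
Import ListNotations.

Definition fact (Rel : Type) : Type := (Rel * list nat)%type.

Definition instance (Rel : Type) : Type := list (fact Rel).

Definition wf_inst {Rel : Type} (ar : Rel -> nat) (I : instance Rel) : Prop :=
  forall R a, In (R, a) I -> length a = ar R.

Definition in_adom {Rel : Type} (I : instance Rel) (c : nat) : Prop :=
  exists R a, In (R, a) I /\ In c a.

Definition is_hom {Rel : Type} (h : nat -> nat) (I J : instance Rel) : Prop :=
  forall R a, In (R, a) I -> In (R, map h a) J.

Definition hom_exists {Rel : Type} (I J : instance Rel) : Prop :=
  exists h : nat -> nat, is_hom h I J.

Definition coCSP {Rel : Type} (S : list (instance Rel)) (I : instance Rel) : Prop :=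
  forall T, In T S -> ~ hom_exists I T.

Definition has_equality {Rel : Type} (eqR : Rel) (T : instance Rel) : Prop :=
  forall a, In (eqR, a) T <-> exists c, a = [c; c] /\ in_adom T c.

(* A cycle of length n > 0: distinct facts F 0, ..., F (n-1) of I and
   positions p i <> p' i of F i with  (F i)_{p' i} = (F (i+1 mod n))_{p (i+1 mod n)}.
   Positions are 0-based. *)
Definition has_cycle {Rel : Type} (I : instance Rel) (n : nat) : Prop :=
  0 < n /\
  exists (F : nat -> fact Rel) (p p' : nat -> nat),
    (forall i, i < n -> In (F i) I) /\
    (forall i j, i < n -> j < n -> i <> j -> F i <> F j) /\
    (forall i, i < n ->
        p i < length (snd (F i)) /\ p' i < length (snd (F i)) /\ p i <> p' i) /\
    (forall i, i < n ->
        nth (p' i) (snd (F i)) 0 =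
        nth (p (S i mod n)) (snd (F (S i mod n))) 0).

Definition girth_gt {Rel : Type} (I : instance Rel) (g : nat) : Prop :=
  forall n, 0 < n -> n <= g -> ~ has_cycle I n.

(* IDB relation symbols are natural numbers; an atom in a rule body is either
   an EDB atom (inl R) or an IDB atom (inr P), applied to a list of variables
   (variables are natural numbers). *)
Record rule (Rel : Type) : Type := mkRule {
  head_rel : nat;
  head_vars : list nat;
  body : list ((Rel + nat) * list nat)
}.
Arguments head_rel {Rel}.
Arguments head_vars {Rel}.
Arguments body {Rel}.

Record program (Rel : Type) : Type := mkProgram {
  idb_ar : nat -> nat;
  goal : nat;
  rules : list (rule Rel)
}.
Arguments idb_ar {Rel}.
Arguments goal {Rel}.
Arguments rules {Rel}.

Definition atom_ar {Rel : Type} (ar : Rel -> nat) (G : program Rel)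
  (s : Rel + nat) : nat :=
  match s with inl R => ar R | inr P => idb_ar G P end.

Definition wf_program {Rel : Type} (ar : Rel -> nat) (G : program Rel) : Prop :=
  idb_ar G (goal G) = 0 /\
  forall r, In r (rules G) ->
    length (head_vars r) = idb_ar G (head_rel r) /\
    (forall s xs, In (s, xs) (body r) -> length xs = atom_ar ar G s) /\
    (forall s xs, In (s, xs) (body r) -> s <> inr (goal G)) /\
    (forall x, In x (head_vars r) ->
        exists s xs, In (s, xs) (body r) /\ In x xs).

Inductive derives {Rel : Type} (G : program Rel) (I : instance Rel) :
    nat -> list nat -> Prop :=
| derives_rule : forall (r : rule Rel) (nu : nat -> nat),
    In r (rules G) ->
    (forall R xs, In (inl R, xs) (body r) -> In (R, map nu xs) I) ->
    (forall P xs, In (inr P, xs) (body r) -> derives G I P (map nu xs)) ->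
    derives G I (head_rel r) (map nu (head_vars r)).

Definition models {Rel : Type} (I : instance Rel) (G : program Rel) : Prop :=
  derives G I (goal G) [].

Definition DLog_rewriting_girth {Rel : Type} (ar : Rel -> nat)
  (S : list (instance Rel)) (g : nat) (G : program Rel) : Prop :=
  forall I : instance Rel, wf_inst ar I -> girth_gt I g ->
    (models I G <-> coCSP S I).

Definition DLog_rewritable_girth {Rel : Type} (ar : Rel -> nat)
  (S : list (instance Rel)) (g : nat) : Prop :=
  exists G : program Rel, wf_program ar G /\ DLog_rewriting_girth ar S g G.

Definition DLog_rewritable {Rel : Type} (ar : Rel -> nat)
  (S : list (instance Rel)) : Prop :=
  exists G : program Rel, wf_program ar G /\
    forall I : instance Rel, wf_inst ar I -> (models I G <-> coCSP S I).

(* Submission.v *)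
Require Import Defs.
From Stdlib Require Import List Arith Lia Bool Cantor ClassicalEpsilon.
Import ListNotations.

Fixpoint lcode (xs : list nat) : nat :=
  match xs with [] => 0 | x :: r => S (Cantor.to_nat (x, lcode r)) end.
Fixpoint ldec (f n : nat) : list nat :=
  match f with 0 => [] | S f' =>
    match n with 0 => [] | S m => let (x, y) := Cantor.of_nat m in x :: ldec f' y end end.

Lemma ldec_lcode_gen xs f : lcode xs <= f -> ldec f (lcode xs) = xs.
Proof.
  revert f; induction xs as [|x r IH]; intros f Hf; cbn -[Cantor.to_nat Cantor.of_nat].
  - destruct f; reflexivity.
  - destruct f as [|f]; [simpl in Hf; lia|]. cbn -[Cantor.to_nat Cantor.of_nat].
    rewrite Cantor.cancel_of_to. f_equal. apply IH.
    cbn -[Cantor.to_nat] in Hf. pose proof (Cantor.to_nat_non_decreasing x (lcode r)). lia.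
Qed.
Definition dec1 n := ldec n n.
Lemma dec1_lcode xs : dec1 (lcode xs) = xs.
Proof. apply ldec_lcode_gen; lia. Qed.
Lemma lcode_inj xs ys : lcode xs = lcode ys -> xs = ys.
Proof. intro H. rewrite <- (dec1_lcode xs), <- (dec1_lcode ys), H. reflexivity. Qed.
Arguments lcode : simpl never.
Arguments dec1 : simpl never.

Section Main.
Context {Rel : Type}.
Variable ar : Rel -> nat.
Variable eqR : Rel.
Variable l : list Rel.
Variable Rdec : forall x y : Rel, {x = y} + {x <> y}.
Variable L : nat.
Hypothesis Hl : forall R, In R l.

Fixpoint idxIn (k : list Rel) (R : Rel) : nat :=
  match k with [] => 0 | a :: r => if Rdec R a then 0 else S (idxIn r R) end.
Definition idx R := idxIn l R.
Lemma idxIn_spec k R : In R k -> nth_error k (idxIn k R) = Some R.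
Proof.
  induction k as [|a r IH]; intro H; [destruct H|].
  simpl. destruct (Rdec R a) as [->|n]; [reflexivity|]. simpl. apply IH.
  destruct H; [congruence|assumption].
Qed.
Lemma idx_spec R : nth_error l (idx R) = Some R.
Proof. apply idxIn_spec, Hl. Qed.
Lemma idx_inj R R' : idx R = idx R' -> R = R'.
Proof. intro H. pose proof (idx_spec R). rewrite H, idx_spec in H0. congruence. Qed.

Inductive ty := Center | Arm (i j t : nat).
Definition ty_dec (a b : ty) : {a = b} + {a <> b}.
Proof. decide equality; apply Nat.eq_dec. Defined.

Definition cconst (τ : ty) (w : list nat) : nat :=
  match τ with Center => lcode [0; nth 0 w 0] | Arm i j t => lcode (1::i::j::t::w) end.
Definition cty a := match dec1 a with 1::i::j::t::_ => Arm i j t | _ => Center end.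
Definition ctup a := match dec1 a with 0::c::_ => [c] | 1::i::j::t::ys => ys | _ => [] end.

Definition node R (ys : list nat) j t :=
  match t with 0 => cconst Center [nth j ys 0] | S _ => cconst (Arm (idx R) j t) ys end.
Definition origF R ys : Defs.fact Rel := (R, map (fun j => node R ys j L) (seq 0 (length ys))).
Definition armF R ys j s : Defs.fact Rel := (eqR, [node R ys j (s-1); node R ys j s]).
Definition Ip (I : instance Rel) : instance Rel :=
  flat_map (fun f => origF (fst f) (snd f) ::
     flat_map (fun j => map (armF (fst f) (snd f) j) (seq 1 L)) (seq 0 (length (snd f)))) I.

Lemma In_Ip I F : In F (Ip I) <-> exists R ys, In (R,ys) I /\
  (F = origF R ys \/ exists j s, j < length ys /\ 1 <= s <= L /\ F = armF R ys j s).
Proof.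
  unfold Ip. rewrite in_flat_map. split.
  - intros [[R ys] [Hin HF]]. exists R, ys. split; [assumption|]. simpl in HF.
    destruct HF as [<-|HF]; [left; reflexivity|right].
    apply in_flat_map in HF. destruct HF as [j [Hj HF]]. apply in_map_iff in HF.
    destruct HF as [s [<- Hs]]. apply in_seq in Hj, Hs. exists j, s. repeat split; lia.
  - intros [R [ys [Hin HF]]]. exists (R, ys). split; [assumption|]. simpl.
    destruct HF as [->|[j [s [Hj [Hs ->]]]]]; [left; reflexivity|right].
    apply in_flat_map. exists j. split; [apply in_seq; lia|]. apply in_map. apply in_seq; lia.
Qed.

Lemma cty_cconst τ w : cty (cconst τ w) = τ.
Proof. destruct τ; unfold cty, cconst; rewrite dec1_lcode; reflexivity. Qed.
Lemma ctup_arm i j t w : ctup (cconst (Arm i j t) w) = w.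
Proof. unfold ctup, cconst; rewrite dec1_lcode; reflexivity. Qed.
Lemma ctup_center w : ctup (cconst Center w) = [nth 0 w 0].
Proof. unfold ctup, cconst; rewrite dec1_lcode; reflexivity. Qed.

Lemma node_arm_inj R ys j t R' ys' j' t' : 1 <= t -> 1 <= t' ->
  node R ys j t = node R' ys' j' t' -> R = R' /\ ys = ys' /\ j = j' /\ t = t'.
Proof.
  intros Ht Ht' H. destruct t as [|t]; [lia|]. destruct t' as [|t']; [lia|].
  simpl in H. apply lcode_inj in H. injection H as H1 H2 H3 H4.
  apply idx_inj in H1. auto.
Qed.
Lemma node_center_arm R ys j R' ys' j' t' : 1 <= t' ->
  node R ys j 0 <> node R' ys' j' t'.
Proof.
  intros Ht' H. destruct t' as [|t']; [lia|]. simpl in H. apply lcode_inj in H. discriminate.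
Qed.

Lemma cty_node R ys j t : cty (node R ys j t) = match t with 0 => Center | _ => Arm (idx R) j t end.
Proof. destruct t; apply cty_cconst. Qed.

End Main.
Arguments node : simpl never.
Arguments cconst : simpl never.

Lemma map_nth_seq_id {A} (ys : list A) d :
  map (fun j => nth j ys d) (seq 0 (length ys)) = ys.
Proof.
  induction ys as [|a r IH]; [reflexivity|].
  simpl. f_equal. rewrite <- seq_shift, map_map. exact IH.
Qed.
Lemma map_nth_seq_self {A B} (f : A -> B) (ys : list A) d :
  map (fun j => f (nth j ys d)) (seq 0 (length ys)) = map f ys.
Proof.
  rewrite <- (map_nth_seq_id ys d) at 2. rewrite map_map. reflexivity.
Qed.

Section Hom.
Context {Rel : Type}.
Variable ar : Rel -> nat.
Variable eqR : Rel.
Variable l : list Rel.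
Variable Rdec : forall x y : Rel, {x = y} + {x <> y}.
Variable L : nat.
Hypothesis Hl : forall R, In R l.
Hypothesis HL : 1 <= L.
Hypothesis Heq : ar eqR = 2.

Notation node := (node l Rdec).
Notation Ip := (Ip eqR l Rdec L).

Definition proj a := match cty a with Center => nth 0 (ctup a) 0 | Arm _ j _ => nth j (ctup a) 0 end.
Lemma proj_node R ys j t : proj (node R ys j t) = nth j ys 0.
Proof.
  unfold proj. rewrite cty_node. destruct t as [|t]; unfold node.
  - rewrite ctup_center. reflexivity.
  - rewrite ctup_arm. reflexivity.
Qed.

Lemma wf_Ip I : wf_inst ar I -> wf_inst ar (Ip I).
Proof.
  intros HI R a Hin. apply In_Ip in Hin. destruct Hin as [R0 [ys [Hin [HF|[j [s [_ [_ HF]]]]]]]].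
  - unfold origF in HF. injection HF as -> ->. rewrite length_map, length_seq. apply HI; assumption.
  - unfold armF in HF. injection HF as -> ->. simpl. symmetry; assumption.
Qed.

Lemma hom_fwd I T h : has_equality eqR T -> is_hom h I T -> is_hom (fun a => h (proj a)) (Ip I) T.
Proof.
  intros HT Hh R a Hin. apply In_Ip in Hin. destruct Hin as [R0 [ys [Hin [HF|[j [s [Hj [Hs HF]]]]]]]].
  - unfold origF in HF. injection HF as -> ->. rewrite map_map.
    erewrite map_ext by (intro; rewrite proj_node; reflexivity).
    rewrite map_nth_seq_self. apply Hh; assumption.
  - unfold armF in HF. injection HF as -> ->. simpl. rewrite !proj_node.
    apply HT. exists (h (nth j ys 0)). split; [reflexivity|].
    exists R0, (map h ys). split; [apply Hh; assumption|].
    apply in_map, nth_In; assumption.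
Qed.

Lemma hom_bwd I T h : has_equality eqR T -> is_hom h (Ip I) T ->
  is_hom (fun c => h (cconst Center [c])) I T.
Proof.
  intros HT Hh R ys Hin.
  assert (Hch : forall j s, j < length ys -> s <= L -> h (node R ys j s) = h (node R ys j 0)).
  { intros j s Hj. induction s as [|s IH]; intro Hs; [reflexivity|].
    assert (HF : In (armF eqR l Rdec R ys j (S s)) (Ip I)).
    { apply In_Ip. exists R, ys. split; [assumption|]. right. exists j, (S s). repeat split; lia. }
    apply Hh in HF. simpl in HF. apply HT in HF. destruct HF as [c [Hc _]].
    injection Hc as H1 H2. rewrite Nat.sub_0_r in H1. rewrite H2, <- H1. apply IH; lia. }
  assert (HF : In (origF l Rdec L R ys) (Ip I)).
  { apply In_Ip. exists R, ys. split; [assumption|]. left; reflexivity. }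
  apply Hh in HF. unfold origF in HF. simpl in HF. rewrite map_map in HF.
  rewrite <- (map_nth_seq_self (fun c => h (cconst Center [c])) ys 0).
  erewrite map_ext_in; [exact HF|].
  intros j Hj. apply in_seq in Hj. simpl. rewrite Hch by lia. reflexivity.
Qed.

Lemma coCSP_Ip S I : (forall T, In T S -> has_equality eqR T) -> (coCSP S I <-> coCSP S (Ip I)).
Proof.
  intros HS. split; intros H T HT [h Hh]; apply (H T HT).
  - exists (fun c => h (cconst Center [c])). apply hom_bwd; auto.
  - exists (fun a => h (proj a)). apply hom_fwd; auto.
Qed.
End Hom.

Lemma nth_map_seq0 {B} (f : nat -> B) n p d : p < n -> nth p (map f (seq 0 n)) d = f p.
Proof.
  intro H. rewrite nth_indep with (d' := f 0) by (rewrite length_map, length_seq; lia).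
  rewrite map_nth, seq_nth by lia. reflexivity.
Qed.

Lemma seq_lemma (psi : nat -> nat) M n :
  (forall k, psi (S k) = if psi k =? M then 0 else S (psi k)) ->
  (forall k, psi (k + n) = psi k) -> 0 < n -> M < n.
Proof.
  intros Hs Hp Hn.
  assert (A : forall k, k <= n -> psi k = psi 0 + k \/ exists k0, k0 < k /\ psi k0 = M).
  { induction k as [|k IH]; intro Hk; [left; lia|].
    destruct IH as [IH|[k0 [H1 H2]]]; [lia| |right; exists k0; split; [lia|assumption]].
    destruct (Nat.eq_dec (psi k) M) as [E|E].
    - right. exists k. split; [lia|assumption].
    - left. rewrite Hs. apply Nat.eqb_neq in E. rewrite E. lia. }
  destruct (A n (le_n n)) as [B|[k0 [H1 H2]]].
  - specialize (Hp 0). simpl in Hp. lia.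
  - assert (C : forall m, m <= M -> psi (S k0 + m) = m).
    { induction m as [|m IH]; intro Hm.
      - rewrite Nat.add_0_r, Hs, H2, Nat.eqb_refl. reflexivity.
      - rewrite Nat.add_succ_r, Hs, IH by lia.
        assert (m =? M = false) by (apply Nat.eqb_neq; lia). rewrite H. reflexivity. }
    destruct (Nat.le_gt_cases n M) as [Hle|Hgt]; [|assumption].
    pose proof (C n Hle) as C1. rewrite Hp in C1.
    specialize (C 0 (Nat.le_0_l _)). rewrite Nat.add_0_r in C. lia.
Qed.

Ltac nca E := first [apply node_center_arm in E; [contradiction|lia] | symmetry in E; apply node_center_arm in E; [contradiction|lia]].

Section Girth.
Context {Rel : Type}.
Variable eqR : Rel.
Variable l : list Rel.
Variable Rdec : forall x y : Rel, {x = y} + {x <> y}.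
Variable L : nat.
Hypothesis Hl : forall R, In R l.
Hypothesis HL : 1 <= L.

Notation node := (node l Rdec).
Notation Ip := (Ip eqR l Rdec L).
Notation origF := (origF l Rdec L).
Notation armF := (armF eqR l Rdec).

Definition phi (F : Defs.fact Rel) (p : nat) : nat :=
  match cty (nth 0 (snd F) 0) with
  | Center => if p =? 0 then L + 1 else L
  | Arm _ _ t => if t <? L then (if p =? 0 then L + t + 1 else L - t) else 0 end.

Definition nxt v := if v =? 2 * L then 0 else S v.

Lemma nth_orig R ys p : p < length ys -> nth p (snd (origF R ys)) 0 = node R ys p L.
Proof. intro H. unfold Submission.origF. simpl. apply (nth_map_seq0 (fun j => node R ys j L)); assumption. Qed.

Lemma phi_orig R ys p : ys <> [] -> phi (origF R ys) p = 0.
Proof.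
  intro H. unfold phi. rewrite nth_orig by (destruct ys; [congruence|simpl; lia]).
  rewrite cty_node. destruct L as [|L']; [lia|]. rewrite Nat.ltb_irrefl. reflexivity.
Qed.

Lemma phi_arm0 R ys j s : 1 <= s <= L -> phi (armF R ys j s) 0 = L + s.
Proof.
  intro H. unfold phi, Submission.armF. simpl. rewrite cty_node.
  destruct (s - 1) eqn:E; [lia|]. assert (S n <? L = true) by (apply Nat.ltb_lt; lia).
  rewrite H0. simpl. lia.
Qed.

Lemma phi_arm1 R ys j s : 1 <= s <= L -> phi (armF R ys j s) 1 = L + 1 - s.
Proof.
  intro H. unfold phi, Submission.armF. simpl. rewrite cty_node.
  destruct (s - 1) eqn:E; [simpl; lia|]. assert (S n <? L = true) by (apply Nat.ltb_lt; lia).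
  rewrite H0. simpl. lia.
Qed.

Lemma nxt_eq v : v <> 2 * L -> nxt v = S v.
Proof. intro H. unfold nxt. apply Nat.eqb_neq in H. rewrite H. reflexivity. Qed.

Lemma no_repeat I F p p' : In F (Ip I) -> p < length (snd F) -> p' < length (snd F) -> p <> p' ->
  nth p (snd F) 0 <> nth p' (snd F) 0.
Proof.
  intros HF Hp Hp' Hne. apply In_Ip in HF. destruct HF as [R [ys [Hin [->|[j [s [Hj [Hs ->]]]]]]]].
  - simpl in Hp, Hp'. rewrite length_map, length_seq in Hp, Hp'.
    rewrite !nth_orig by assumption. intro E. apply node_arm_inj in E; try assumption; lia.
  - simpl in Hp, Hp'. intro E.
    destruct p as [|[|p]]; destruct p' as [|[|p']]; try lia; simpl in E.
    + destruct (s - 1) eqn:Es.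
      * apply node_center_arm in E; [assumption|lia].
      * apply node_arm_inj in E; try assumption; lia.
    + destruct (s - 1) eqn:Es.
      * symmetry in E. apply node_center_arm in E; [assumption|lia].
      * apply node_arm_inj in E; try assumption; lia.
Qed.

Lemma step I F F' p p' q : In F (Ip I) -> In F' (Ip I) -> F <> F' ->
  p < length (snd F) -> p' < length (snd F) -> p <> p' -> q < length (snd F') ->
  nth p' (snd F) 0 = nth q (snd F') 0 -> phi F' q = nxt (phi F p).
Proof.
  intros HF HF' Hne Hp Hp' Hpp Hq E.
  apply In_Ip in HF. destruct HF as [R [ys [Hin [->|[j [s [Hj [Hs ->]]]]]]]];
  apply In_Ip in HF'; destruct HF' as [R' [ys' [Hin' [->|[j' [s' [Hj' [Hs' ->]]]]]]]].
  - simpl in Hp, Hp', Hq. rewrite length_map, length_seq in Hp, Hp', Hq.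
    rewrite !nth_orig in E by assumption. apply node_arm_inj in E; try assumption; try lia.
    destruct E as [-> [-> _]]. congruence.
  - simpl in Hp, Hp', Hq. rewrite length_map, length_seq in Hp, Hp'.
    rewrite nth_orig in E by assumption.
    rewrite phi_orig by (destruct ys; [simpl in Hp; lia|congruence]).
    rewrite nxt_eq by lia.
    destruct q as [|[|q]]; [|simpl in E|lia].
    + simpl in E. destruct (s' - 1) eqn:Es.
      * nca E.
      * apply node_arm_inj in E; try assumption; lia.
    + apply node_arm_inj in E; try assumption; try lia.
      rewrite phi_arm1 by lia. lia.
  - simpl in Hp, Hp', Hq. rewrite length_map, length_seq in Hq.
    rewrite nth_orig in E by assumption. rewrite phi_orig by (destruct ys'; [simpl in Hq; lia|congruence]).
    destruct p as [|[|p]]; destruct p' as [|[|p']]; try lia; simpl in E.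
    + apply node_arm_inj in E; try assumption; try lia.
      rewrite phi_arm0 by lia. unfold nxt. destruct E as [_ [_ [_ ->]]].
      replace (L + L =? 2 * L) with true by (symmetry; apply Nat.eqb_eq; lia). reflexivity.
    + destruct (s - 1) eqn:Es.
      * nca E.
      * apply node_arm_inj in E; try assumption; lia.
  - simpl in Hp, Hp', Hq.
    destruct p as [|[|p]]; destruct p' as [|[|p']]; try lia; simpl in E.
    +
      rewrite phi_arm0 by lia.
      destruct q as [|[|q]]; [|simpl in E|lia].
      * simpl in E. destruct (s' - 1) eqn:Es.
        -- nca E.
        -- apply node_arm_inj in E; try assumption; try lia.
           destruct E as [-> [-> [-> E]]]. rewrite phi_arm0 by lia. rewrite nxt_eq by lia. lia.
      * apply node_arm_inj in E; try assumption; try lia.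
        destruct E as [-> [-> [-> ->]]]. congruence.
    + rewrite phi_arm1 by lia.
      destruct q as [|[|q]]; [|simpl in E|lia].
      * simpl in E. destruct (s - 1) eqn:Es; destruct (s' - 1) eqn:Es'.
        -- rewrite phi_arm0 by lia. rewrite nxt_eq by lia. lia.
        -- nca E.
        -- nca E.
        -- apply node_arm_inj in E; try assumption; try lia.
           destruct E as [-> [-> [-> E]]]. assert (s = s') by lia. subst. congruence.
      * destruct (s - 1) eqn:Es.
        -- nca E.
        -- apply node_arm_inj in E; try assumption; try lia.
           destruct E as [-> [-> [-> E]]]. rewrite phi_arm1 by lia. rewrite nxt_eq by lia. lia.
Qed.

Lemma girth_Ip I g : L = S g -> girth_gt (Ip I) g.
Proof.
  intros HLg n Hn Hng [_ [F [p [p' [HFin [Hdist [Hpos Hcyc]]]]]]].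
  destruct (Nat.eq_dec n 1) as [->|Hn1].
  - specialize (Hcyc 0 Hn). simpl in Hcyc. destruct (Hpos 0 Hn) as [A [B C]].
    apply (no_repeat I (F 0) (p' 0) (p 0)); auto.
  - set (psi k := phi (F (k mod n)) (p (k mod n))).
    assert (Hs : forall k, psi (S k) = nxt (psi k)).
    { intro k. unfold psi. assert (Hi : k mod n < n) by (apply Nat.mod_upper_bound; lia).
      assert (HSk : S k mod n = S (k mod n) mod n).
      { replace (S k) with (k + 1) by lia. replace (S (k mod n)) with (k mod n + 1) by lia.
        symmetry. apply Nat.Div0.add_mod_idemp_l. }
      rewrite HSk. set (i := k mod n) in *.
      assert (Hj : S i mod n < n) by (apply Nat.mod_upper_bound; lia).
      destruct (Hpos i Hi) as [A [B C]]. destruct (Hpos _ Hj) as [A' [B' C']].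
      apply (step I (F i) (F (S i mod n)) (p i) (p' i)); auto.
      apply Hdist; auto. intro E.
      destruct (Nat.eq_dec (S i) n) as [E2|E2].
      - rewrite E2, Nat.mod_same in E by lia. lia.
      - rewrite Nat.mod_small in E by lia. lia. }
    assert (Hp : forall k, psi (k + n) = psi k).
    { intro k. unfold psi. replace (k + n) with (k + 1 * n) by lia. rewrite Nat.Div0.mod_add. reflexivity. }
    pose proof (seq_lemma psi (2 * L) n) as X.
    assert (2 * L < n); [apply X; auto|lia].
Qed.
End Girth.

Fixpoint idxOf (x : nat) (vs : list nat) : nat :=
  match vs with [] => 0 | y :: r => if x =? y then 0 else S (idxOf x r) end.
Lemma idxOf_spec x vs : In x vs -> idxOf x vs < length vs /\ nth (idxOf x vs) vs 0 = x.
Proof.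
  induction vs as [|y r IH]; intro H; [destruct H|]. simpl.
  destruct (Nat.eqb_spec x y) as [->|Hn]; [split; [lia|reflexivity]|].
  destruct H as [->|H]; [congruence|]. destruct (IH H). split; [lia|assumption].
Qed.

Section Trans.
Context {Rel : Type}.
Variable ar : Rel -> nat.
Variable eqR : Rel.
Variable l : list Rel.
Variable Rdec : forall x y : Rel, {x = y} + {x <> y}.
Variable L : nat.
Variable G : program Rel.

Notation idx := (idx l Rdec).
Notation node := (node l Rdec).
Notation Ip := (Ip eqR l Rdec L).

Definition W (τ : ty) : nat :=
  match τ with Center => 1 | Arm i _ _ => match nth_error l i with Some R => ar R | None => 0 end end.
Definition vc x k := lcode [x; k].
Definition tv x τ := map (vc x) (seq 0 (W τ)).
Definition tcode τ := match τ with Center => lcode [0] | Arm i j t => lcode [1; i; j; t] end.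
Definition tdec n := match dec1 n with [1; i; j; t] => Arm i j t | _ => Center end.
Definition sym P τs := lcode (1 :: P :: map tcode τs).
Definition SameS := lcode [0].
Definition idb' n := match dec1 n with 1 :: P :: cs => list_sum (map (fun c => W (tdec c)) cs) | _ => 2 end.
Definition SameA a b : (Rel + nat) * list nat := (inr SameS, [a; b]).

Definition trEDB (σ : nat -> ty) (R : Rel) (xs : list nat) : option (list ((Rel + nat) * list nat)) :=
  if list_eq_dec ty_dec (map σ xs) (map (fun m => Arm (idx R) m L) (seq 0 (length xs))) then
    Some ((inl R, map (vc (nth 0 xs 0)) (seq 0 (ar R))) ::
          flat_map (fun x => map (fun p => SameA (vc x p) (vc (nth 0 xs 0) p)) (seq 0 (ar R))) xs)
  else if Rdec R eqR then
    match xs with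
    | [x; y] =>
      match σ y with
      | Arm i j s =>
        match nth_error l i with
        | Some Ri =>
          if (i =? idx Ri) && (j <? ar Ri) && (1 <=? s) && (s <=? L) then
            if s =? 1 then
              (if ty_dec (σ x) Center then
                 Some [(inl Ri, map (vc y) (seq 0 (ar Ri))); SameA (vc y j) (vc x 0)]
               else None)
            else
              (if ty_dec (σ x) (Arm i j (s - 1)) then
                 Some ((inl Ri, map (vc y) (seq 0 (ar Ri))) ::
                       map (fun p => SameA (vc x p) (vc y p)) (seq 0 (ar Ri)))
               else None)
          else None
        | None => None
        end
      | Center => None
      end
    | _ => None
    end
  else None.

Definition trAtom (σ : nat -> ty) (a : (Rel + nat) * list nat) : option (list ((Rel + nat) * list nat)) :=
  match fst a with
  | inl R => trEDB σ R (snd a)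
  | inr P => Some [(inr (sym P (map σ (snd a))), flat_map (fun x => tv x (σ x)) (snd a))]
  end.

Fixpoint trBody σ (b : list ((Rel + nat) * list nat)) : option (list ((Rel + nat) * list nat)) :=
  match b with
  | [] => Some []
  | a :: r => match trAtom σ a, trBody σ r with Some u, Some v => Some (u ++ v) | _, _ => None end
  end.

Definition vars (r : rule Rel) := head_vars r ++ flat_map snd (body r).
Definition sigma vs ts x := nth (idxOf x vs) ts Center.

Definition trRule (r : rule Rel) ts : option (rule Rel) :=
  let σ := sigma (vars r) ts in
  match trBody σ (body r) with
  | Some b => Some (mkRule _ (sym (head_rel r) (map σ (head_vars r)))
                            (flat_map (fun x => tv x (σ x)) (head_vars r)) b)
  | None => None
  end.

Definition maxAr := S (list_max (map ar l)).
Definition allTypes := Center :: flat_map (fun i => flat_map (fun j => map (fun t => Arm i j t) (seq 1 L))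
                          (seq 0 maxAr)) (seq 0 (length l)).
Fixpoint allLists (n : nat) : list (list ty) :=
  match n with 0 => [[]] | S n => flat_map (fun a => map (cons a) (allLists n)) allTypes end.

Definition sameRules : list (rule Rel) :=
  flat_map (fun R => map (fun p => mkRule _ SameS [p; p] [(inl R, seq 0 (ar R))]) (seq 0 (ar R))) l.

Definition trRules : list (rule Rel) :=
  flat_map (fun r => flat_map (fun ts => match trRule r ts with Some r' => [r'] | None => [] end)
                       (allLists (length (vars r)))) (rules G).

Definition G' : program Rel := mkProgram _ idb' (sym (goal G) []) (sameRules ++ trRules).

Fixpoint dec (τs : list ty) (args : list nat) : list nat :=
  match τs with [] => [] | τ :: r => cconst τ (firstn (W τ) args) :: dec r (skipn (W τ) args) end.

Lemma tdec_tcode τ : tdec (tcode τ) = τ.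
Proof. destruct τ; unfold tdec, tcode; rewrite dec1_lcode; reflexivity. Qed.
Lemma map_tcode_inj a b : map tcode a = map tcode b -> a = b.
Proof.
  intro H. assert (H0 : map tdec (map tcode a) = map tdec (map tcode b)) by (rewrite H; reflexivity).
  rewrite !map_map, !(map_ext (fun x => tdec (tcode x)) (fun x => x) tdec_tcode), !map_id in H0.
  exact H0.
Qed.
Lemma sym_inj P τs P' τs' : sym P τs = sym P' τs' -> P = P' /\ τs = τs'.
Proof.
  unfold sym. intro H. apply lcode_inj in H. injection H as H1 H2. split; [assumption|].
  apply map_tcode_inj; assumption.
Qed.
Lemma sym_Same P τs : sym P τs <> SameS.
Proof. unfold sym, SameS. intro H. apply lcode_inj in H. discriminate. Qed.
Lemma idb'_sym P τs : idb' (sym P τs) = list_sum (map W τs).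
Proof.
  unfold idb', sym. rewrite dec1_lcode. rewrite map_map.
  erewrite map_ext by (intro; rewrite tdec_tcode; reflexivity). reflexivity.
Qed.
Lemma idb'_Same : idb' SameS = 2.
Proof. unfold idb', SameS. rewrite dec1_lcode. reflexivity. Qed.
Lemma vc_dec x k : dec1 (vc x k) = [x; k].
Proof. apply dec1_lcode. Qed.
Lemma length_tv x τ : length (tv x τ) = W τ.
Proof. unfold tv. rewrite length_map, length_seq. reflexivity. Qed.
Lemma length_flat_tv σ xs : length (flat_map (fun x => tv x (σ x)) xs) = list_sum (map W (map σ xs)).
Proof.
  induction xs as [|x r IH]; [reflexivity|]. simpl. rewrite length_app, length_tv, IH. reflexivity.
Qed.

Lemma map_flat_map {A B C} (f : A -> list B) (g : B -> C) xs :
  map g (flat_map f xs) = flat_map (fun x => map g (f x)) xs.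
Proof. induction xs; simpl; [reflexivity|]. rewrite map_app, IHxs. reflexivity. Qed.

Lemma dec_spec (σ : nat -> ty) (nu' : nat -> nat) xs :
  dec (map σ xs) (map nu' (flat_map (fun x => tv x (σ x)) xs)) =
  map (fun x => cconst (σ x) (map nu' (tv x (σ x)))) xs.
Proof.
  induction xs as [|x r IH]; [reflexivity|]. simpl. rewrite map_app.
  assert (Hl : length (map nu' (tv x (σ x))) = W (σ x)) by (rewrite length_map; apply length_tv).
  rewrite firstn_app, skipn_app, Hl, Nat.sub_diag, firstn_O, skipn_O, app_nil_r.
  rewrite <- Hl, firstn_all, skipn_all. simpl. rewrite IH. reflexivity.
Qed.

Lemma trBody_sound σ b u : trBody σ b = Some u ->
  forall a, In a b -> exists v, trAtom σ a = Some v /\ incl v u.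
Proof.
  revert u; induction b as [|a0 r IH]; intros u H a Ha; [destruct Ha|].
  simpl in H. destruct (trAtom σ a0) eqn:E1; [|discriminate].
  destruct (trBody σ r) eqn:E2; [|discriminate]. injection H as <-.
  destruct Ha as [<-|Ha].
  - exists l0. split; [assumption|]. apply incl_appl, incl_refl.
  - destruct (IH l1 eq_refl a Ha) as [v [Hv Hi]]. exists v. split; [assumption|].
    apply incl_appr; assumption.
Qed.

Lemma trBody_complete σ b (Pr : (Rel + nat) * list nat -> Prop) :
  (forall a, In a b -> exists v, trAtom σ a = Some v /\ forall z, In z v -> Pr z) ->
  exists u, trBody σ b = Some u /\ forall z, In z u -> Pr z.
Proof.
  induction b as [|a r IH]; intro H.
  - exists []. split; [reflexivity|]. intros z [].
  - destruct (H a (or_introl eq_refl)) as [v [Hv Pv]].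
    destruct IH as [u [Hu Pu]]; [intros; apply H; right; assumption|].
    exists (v ++ u). simpl. rewrite Hv, Hu. split; [reflexivity|].
    intros z Hz. apply in_app_or in Hz. destruct Hz; auto.
Qed.

End Trans.

Lemma nth_map_any {A B} (f : A -> B) xs m d d0 : m < length xs -> nth m (map f xs) d = f (nth m xs d0).
Proof.
  intro H. rewrite nth_indep with (d' := f d0) by (rewrite length_map; assumption).
  apply map_nth.
Qed.

Section Sound.
Context {Rel : Type}.
Variable ar : Rel -> nat.
Variable eqR : Rel.
Variable l : list Rel.
Variable Rdec : forall x y : Rel, {x = y} + {x <> y}.
Variable L : nat.
Hypothesis Hl : forall R, In R l.
Hypothesis HL : 1 <= L.

Notation idx := (idx l Rdec).
Notation node := (node l Rdec).
Notation Ip := (Ip eqR l Rdec L).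
Notation W := (W ar l).
Notation tv := (tv ar l).

Lemma W_arm R j t : W (Arm (idx R) j t) = ar R.
Proof. unfold Submission.W. rewrite idx_spec by assumption. reflexivity. Qed.

Lemma node_L R ys m : node R ys m L = cconst (Arm (idx R) m L) ys.
Proof. unfold Submission.node. destruct L; [lia|reflexivity]. Qed.
Lemma node_S R ys m t : 1 <= t -> node R ys m t = cconst (Arm (idx R) m t) ys.
Proof. intro H. unfold Submission.node. destruct t; [lia|reflexivity]. Qed.

Lemma EDB_sound I (σ : nat -> ty) nu' R xs u : length xs = ar R ->
  trEDB ar eqR l Rdec L σ R xs = Some u ->
  (forall R' zs, In (inl R', zs) u -> In (R', map nu' zs) I) ->
  (forall a b, In (SameA a b) u -> nu' a = nu' b) ->
  In (R, map (fun x => cconst (σ x) (map nu' (tv x (σ x)))) xs) (Ip I).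
Proof.
  intros Hlen Hu HE HS. unfold trEDB in Hu.
  destruct (list_eq_dec ty_dec _ _) as [Hm|Hm].
  - injection Hu as <-. set (x0 := nth 0 xs 0) in *.
    set (ys := map nu' (map (vc x0) (seq 0 (ar R)))).
    assert (Hin : In (R, ys) I) by (apply HE; left; reflexivity).
    assert (Hsame : forall x p, In x xs -> p < ar R -> nu' (vc x p) = nu' (vc x0 p)).
    { intros x p Hx Hp. apply HS. right. apply in_flat_map. exists x. split; [assumption|].
      apply (in_map (fun p => SameA (vc x p) (vc x0 p))). apply in_seq. lia. }
    assert (Hys : length ys = length xs) by (unfold ys; rewrite !length_map, length_seq; lia).
    apply In_Ip. exists R, ys. split; [assumption|]. left. unfold origF. f_equal.
    rewrite Hys. rewrite <- (map_nth_seq_self (fun x => cconst (σ x) (map nu' (tv x (σ x)))) xs 0).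
    apply map_ext_in. intros m Hm'. apply in_seq in Hm'.
    assert (Hsm : σ (nth m xs 0) = Arm (idx R) m L).
    { pose proof (f_equal (fun z => nth m z Center) Hm) as E. simpl in E.
      rewrite (nth_map_any σ xs m Center 0) in E by lia.
      rewrite (nth_map_seq0 (fun m => Arm (idx R) m L)) in E by lia. exact E. }
    rewrite Hsm, node_L. f_equal. unfold Submission.tv. rewrite W_arm.
    unfold ys. rewrite !map_map. apply map_ext_in. intros p Hp. apply in_seq in Hp.
    apply Hsame; [apply nth_In; lia|lia].
  - destruct (Rdec R eqR) as [->|]; [|discriminate].
    destruct xs as [|x [|y [|? ?]]]; try discriminate.
    destruct (σ y) as [|i j t] eqn:Ey; try discriminate.
    destruct (nth_error l i) as [Ri|] eqn:Ei; try discriminate.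
    destruct ((i =? idx Ri) && (j <? ar Ri) && (1 <=? t) && (t <=? L)) eqn:Ec; [|discriminate].
    apply andb_true_iff in Ec as [Ec H4]. apply andb_true_iff in Ec as [Ec H3].
    apply andb_true_iff in Ec as [H1 H2].
    apply Nat.eqb_eq in H1. apply Nat.ltb_lt in H2. apply Nat.leb_le in H3. apply Nat.leb_le in H4.
    set (ys := map nu' (map (vc y) (seq 0 (ar Ri)))).
    assert (Hys : length ys = ar Ri) by (unfold ys; rewrite !length_map, length_seq; lia).
    assert (Hnuy : cconst (σ y) (map nu' (tv y (σ y))) = node Ri ys j t).
    { rewrite Ey, node_S by lia. rewrite <- H1. unfold Submission.tv, Submission.W. rewrite Ei. reflexivity. }
    simpl. rewrite Hnuy.
    destruct (t =? 1) eqn:Et.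
    + apply Nat.eqb_eq in Et. subst t.
      destruct (ty_dec (σ x) Center) as [Ex|]; [|discriminate]. injection Hu as <-.
      assert (Hs : nu' (vc y j) = nu' (vc x 0)) by (apply HS; right; left; reflexivity).
      assert (Hin : In (Ri, ys) I) by (apply HE; left; reflexivity).
      apply In_Ip. exists Ri, ys. split; [assumption|]. right. exists j, 1.
      split; [lia|]. split; [lia|]. unfold armF. simpl. f_equal. f_equal.
      rewrite Ex. unfold Submission.node. f_equal. unfold Submission.tv, Submission.W. simpl. f_equal. f_equal.
      rewrite <- Hs. unfold ys. rewrite map_map. rewrite (nth_map_seq0 (fun p => nu' (vc y p))) by lia.
      reflexivity.
    + apply Nat.eqb_neq in Et.
      destruct (ty_dec (σ x) (Arm i j (t - 1))) as [Ex|]; [|discriminate]. injection Hu as <-.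
      assert (Hin : In (Ri, ys) I) by (apply HE; left; reflexivity).
      apply In_Ip. exists Ri, ys. split; [assumption|]. right. exists j, t.
      split; [lia|]. split; [lia|]. unfold armF. f_equal. f_equal.
      rewrite Ex, node_S by lia. rewrite <- H1. f_equal.
      unfold Submission.tv, Submission.W. rewrite Ei. unfold ys. rewrite !map_map. apply map_ext_in.
      intros p Hp. apply in_seq in Hp. apply HS. right. apply in_map_iff. exists p.
      split; [reflexivity|]. apply in_seq. lia.
Qed.

End Sound.

Section Sound2.
Context {Rel : Type}.
Variable ar : Rel -> nat.
Variable eqR : Rel.
Variable l : list Rel.
Variable Rdec : forall x y : Rel, {x = y} + {x <> y}.
Variable L : nat.
Variable G : program Rel.
Hypothesis Hl : forall R, In R l.
Hypothesis HL : 1 <= L.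
Hypothesis wfG : wf_program ar G.

Notation Ip := (Ip eqR l Rdec L).
Notation G' := (G' ar eqR l Rdec L G).

Lemma in_G'_rules r' : In r' (rules G') ->
  (exists R p, In R l /\ p < ar R /\ r' = mkRule _ SameS [p; p] [(inl R, seq 0 (ar R))]) \/
  (exists r ts, In r (rules G) /\ trRule ar eqR l Rdec L r ts = Some r').
Proof.
  simpl. intro H. apply in_app_or in H. destruct H as [H|H].
  - left. unfold sameRules in H. apply in_flat_map in H. destruct H as [R [HR H]].
    apply in_map_iff in H. destruct H as [p [<- Hp]]. apply in_seq in Hp.
    exists R, p. repeat split; auto; lia.
  - right. unfold trRules in H. apply in_flat_map in H. destruct H as [r [Hr H]].
    apply in_flat_map in H. destruct H as [ts [_ H]].
    destruct (trRule ar eqR l Rdec L r ts) eqn:E; [|destruct H].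
    destruct H as [<-|[]]. exists r, ts. auto.
Qed.

Lemma sound I Q args : derives G' I Q args ->
  (Q = SameS -> exists a, args = [a; a] /\ in_adom I a) /\
  (forall P τs, Q = sym P τs -> derives G (Ip I) P (dec ar l τs args)).
Proof.
  intro H. induction H as [r' nu' Hr HE HI IH].
  apply in_G'_rules in Hr. destruct Hr as [[R [p [HR [Hp ->]]]]|[r [ts [Hr Htr]]]].
  - simpl. split.
    + intros _. exists (nu' p). split; [reflexivity|].
      exists R, (map nu' (seq 0 (ar R))). split.
      * apply HE. left. reflexivity.
      * apply in_map. apply in_seq. lia.
    + intros P τs E. symmetry in E. apply sym_Same in E. destruct E.
  - unfold trRule in Htr. set (σ := sigma (vars r) ts) in *.
    destruct (trBody ar eqR l Rdec L σ (body r)) as [b|] eqn:Eb; [|discriminate].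
    injection Htr as <-. simpl in HE, HI, IH |- *. split.
    + intro E. apply sym_Same in E. destruct E.
    + intros P τs E. apply sym_inj in E. destruct E as [E1 E2]. subst P τs.
      rewrite dec_spec. apply derives_rule; [assumption| |].
      * intros R xs Hin.
        destruct (trBody_sound ar eqR l Rdec L σ _ _ Eb _ Hin) as [v [Hv Hinc]].
        simpl in Hv. apply (EDB_sound ar eqR l Rdec L Hl HL I σ nu' R xs v); auto.
        -- destruct wfG as [_ W]. destruct (W r Hr) as [_ [W2 _]]. apply (W2 (inl R) xs Hin).
        -- intros a b' Hab. apply Hinc in Hab. destruct (IH _ _ Hab) as [X _].
           destruct (X eq_refl) as [c [Hc _]]. simpl in Hc. congruence.
      * intros P0 xs Hin.
        destruct (trBody_sound ar eqR l Rdec L σ _ _ Eb _ Hin) as [v [Hv Hinc]].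
        simpl in Hv. injection Hv as <-.
        assert (Hz := Hinc _ (or_introl eq_refl)). destruct (IH _ _ Hz) as [_ X].
        specialize (X P0 (map σ xs) eq_refl). rewrite dec_spec in X. exact X.
Qed.
End Sound2.

Section Comp.
Context {Rel : Type}.
Variable ar : Rel -> nat.
Variable eqR : Rel.
Variable l : list Rel.
Variable Rdec : forall x y : Rel, {x = y} + {x <> y}.
Variable L : nat.
Hypothesis Hl : forall R, In R l.
Hypothesis HL : 1 <= L.

Notation idx := (idx l Rdec).
Notation node := (node l Rdec).
Notation Ip := (Ip eqR l Rdec L).
Notation W := (W ar l).
Notation tv := (tv ar l).

Lemma ctup_node R ys j t : ctup (node R ys j t) = match t with 0 => [nth j ys 0] | _ => ys end.
Proof. unfold Submission.node. destruct t; [rewrite ctup_center; reflexivity|apply ctup_arm]. Qed.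

Lemma cty_node_S R ys j t : 1 <= t -> cty (node R ys j t) = Arm (idx R) j t.
Proof. intro H. rewrite cty_node. destruct t; [lia|reflexivity]. Qed.
Lemma ctup_node_S R ys j t : 1 <= t -> ctup (node R ys j t) = ys.
Proof. intro H. rewrite ctup_node. destruct t; [lia|reflexivity]. Qed.

Lemma EDB_complete I (wfI : wf_inst ar I) (nu nu' : nat -> nat) (σ : nat -> ty) R xs :
  (forall x k, nu' (vc x k) = nth k (ctup (nu x)) 0) ->
  In (R, map nu xs) (Ip I) -> (forall x, In x xs -> σ x = cty (nu x)) ->
  exists u, trEDB ar eqR l Rdec L σ R xs = Some u /\
    (forall R' zs, In (inl R', zs) u -> In (R', map nu' zs) I) /\
    (forall Q zs, In (inr Q, zs) u -> exists a, Q = SameS /\ map nu' zs = [a; a] /\ in_adom I a).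
Proof.
  intros Hnu' HF Hσ. apply In_Ip in HF.
  destruct HF as [R0 [ys [Hin [HF|[j [s [Hj [Hs HF]]]]]]]].
  - unfold origF in HF. injection HF as <- HF.
    assert (Hlen : length xs = length ys) by (apply (f_equal (@length _)) in HF; rewrite !length_map, length_seq in HF; exact HF).
    assert (HarR : ar R = length ys) by (symmetry; apply wfI; assumption).
    assert (Hx : forall m, m < length xs -> nu (nth m xs 0) = node R ys m L).
    { intros m Hm. pose proof (f_equal (fun z => nth m z 0) HF) as E. simpl in E.
      rewrite (nth_map_any nu xs m 0 0) in E by lia.
      rewrite (nth_map_seq0 (fun j => node R ys j L)) in E by lia. exact E. }
    assert (Hxs : forall x, In x xs -> ctup (nu x) = ys).
    { intros x Hxin. destruct (In_nth xs x 0 Hxin) as [m [Hm <-]]. rewrite Hx by assumption.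
      apply ctup_node_S; assumption. }
    assert (Hm : map σ xs = map (fun m => Arm (idx R) m L) (seq 0 (length xs))).
    { rewrite <- (map_nth_seq_self σ xs 0). apply map_ext_in. intros m Hm. apply in_seq in Hm.
      rewrite Hσ by (apply nth_In; lia). rewrite Hx by lia. apply cty_node_S; assumption. }
    unfold trEDB. destruct (list_eq_dec ty_dec _ _) as [_|Hne]; [|contradiction].
    eexists. split; [reflexivity|]. split.
    + intros R' zs Hz. destruct Hz as [Hz|Hz].
      * injection Hz as <- <-. rewrite map_map.
        erewrite map_ext by (intro; rewrite Hnu'; reflexivity).
        destruct xs as [|x0 xs'].
        -- simpl in Hlen. destruct ys; [|simpl in Hlen; lia]. simpl in HarR. rewrite HarR. exact Hin.
        -- simpl. rewrite Hxs by (left; reflexivity). rewrite HarR, map_nth_seq_id. exact Hin.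
      * apply in_flat_map in Hz. destruct Hz as [x [_ Hz]]. apply in_map_iff in Hz.
        destruct Hz as [p [Hz _]]. discriminate.
    + intros Q zs Hz. destruct Hz as [Hz|Hz]; [discriminate|].
      apply in_flat_map in Hz. destruct Hz as [x [Hxin Hz]]. apply in_map_iff in Hz.
      destruct Hz as [p [Hz Hp]]. apply in_seq in Hp. unfold SameA in Hz. injection Hz as <- <-.
      exists (nth p ys 0). split; [reflexivity|]. simpl. rewrite !Hnu'.
      assert (Hx0 : In (nth 0 xs 0) xs) by (destruct xs; [destruct Hxin|left; reflexivity]).
      rewrite !Hxs by assumption. split; [reflexivity|].
      exists R, ys. split; [assumption|]. apply nth_In. lia.
  - unfold armF in HF. injection HF as -> HF.
    assert (HarR : ar R0 = length ys) by (symmetry; apply wfI; assumption).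
    destruct xs as [|x [|y [|? ?]]]; simpl in HF; try discriminate.
    injection HF as Hnx Hny.
    assert (Hσy : σ y = Arm (idx R0) j s) by (rewrite Hσ, Hny by (right; left; reflexivity); apply cty_node_S; lia).
    assert (Hσx : σ x = cty (node R0 ys j (s - 1))) by (rewrite Hσ, Hnx by (left; reflexivity); reflexivity).
    assert (Htupy : ctup (nu y) = ys) by (rewrite Hny; apply ctup_node_S; lia).
    unfold trEDB. destruct (list_eq_dec ty_dec _ _) as [Hm|_].
    { exfalso. simpl in Hm. injection Hm as Hm1 Hm2. rewrite Hσx in Hm1. rewrite cty_node in Hm1.
      destruct (s - 1) eqn:E; [discriminate|]. injection Hm1 as _ _ E2. lia. }
    destruct (Rdec eqR eqR) as [_|n]; [|contradiction].
    rewrite Hσy, idx_spec by assumption. rewrite Nat.eqb_refl.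
    assert (E1 : (j <? ar R0) = true) by (apply Nat.ltb_lt; lia).
    assert (E2 : (1 <=? s) = true) by (apply Nat.leb_le; lia).
    assert (E3 : (s <=? L) = true) by (apply Nat.leb_le; lia).
    rewrite E1, E2, E3. simpl.
    assert (Hyat : map nu' (map (vc y) (seq 0 (ar R0))) = ys).
    { rewrite map_map. erewrite map_ext by (intro; rewrite Hnu'; reflexivity).
      rewrite Htupy, HarR. apply map_nth_seq_id. }
    destruct (s =? 1) eqn:Es.
    + apply Nat.eqb_eq in Es. subst s. simpl in Hσx. rewrite cty_node in Hσx.
      destruct (ty_dec (σ x) Center) as [_|n]; [|contradiction].
      eexists. split; [reflexivity|]. split.
      * intros R' zs [Hz|[Hz|[]]]; [|discriminate]. injection Hz as <- <-. rewrite Hyat. exact Hin.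
      * intros Q zs [Hz|[Hz|[]]]; [discriminate|]. injection Hz as <- <-.
        exists (nth j ys 0). split; [reflexivity|]. simpl. rewrite !Hnu', Htupy, Hnx.
        simpl. rewrite ctup_node. split; [reflexivity|].
        exists R0, ys. split; [assumption|]. apply nth_In; lia.
    + apply Nat.eqb_neq in Es. rewrite cty_node_S in Hσx by lia.
      destruct (ty_dec (σ x) (Arm (idx R0) j (s - 1))) as [_|n]; [|contradiction].
      eexists. split; [reflexivity|]. split.
      * intros R' zs [Hz|Hz]; [|apply in_map_iff in Hz; destruct Hz as [? [Hz _]]; discriminate].
        injection Hz as <- <-. rewrite Hyat. exact Hin.
      * intros Q zs [Hz|Hz]; [discriminate|]. apply in_map_iff in Hz. destruct Hz as [p [Hz Hp]].
        apply in_seq in Hp. injection Hz as <- <-.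
        exists (nth p ys 0). split; [reflexivity|]. simpl. rewrite !Hnu', Htupy, Hnx.
        rewrite ctup_node_S by lia. split; [reflexivity|].
        exists R0, ys. split; [assumption|]. apply nth_In; lia.
Qed.

End Comp.

Lemma flat_map_ext_in {A B} (f g : A -> list B) xs : (forall x, In x xs -> f x = g x) ->
  flat_map f xs = flat_map g xs.
Proof. induction xs as [|a r IH]; intro H; [reflexivity|]. simpl. rewrite H by (left; reflexivity). rewrite IH; auto. intros; apply H; right; assumption. Qed.
Lemma flat_map_map' {A B C} (f : B -> list C) (g : A -> B) xs : flat_map f (map g xs) = flat_map (fun x => f (g x)) xs.
Proof. induction xs; simpl; [reflexivity|]. rewrite IHxs. reflexivity. Qed.
Lemma in_list_max x xs : In x xs -> x <= list_max xs.
Proof.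
  intro H. pose proof (proj1 (list_max_le xs (list_max xs)) (le_n _)) as F.
  rewrite Forall_forall in F. apply F, H.
Qed.

Section Comp2.
Context {Rel : Type}.
Variable ar : Rel -> nat.
Variable eqR : Rel.
Variable l : list Rel.
Variable Rdec : forall x y : Rel, {x = y} + {x <> y}.
Variable L : nat.
Variable G : program Rel.
Hypothesis Hl : forall R, In R l.
Hypothesis HL : 1 <= L.
Hypothesis wfG : wf_program ar G.

Notation idx := (idx l Rdec).
Notation node := (node l Rdec).
Notation Ip := (Ip eqR l Rdec L).
Notation W := (W ar l).
Notation tv := (tv ar l).
Notation G' := (G' ar eqR l Rdec L G).

Lemma adom_Ip I a : in_adom (Ip I) a -> exists R ys j t, In (R, ys) I /\ j < length ys /\ t <= L /\ a = node R ys j t.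
Proof.
  intros [R [xs [Hin Ha]]]. apply In_Ip in Hin.
  destruct Hin as [R0 [ys [Hin [HF|[j [s [Hj [Hs HF]]]]]]]].
  - unfold origF in HF. injection HF as _ ->. apply in_map_iff in Ha. destruct Ha as [j [<- Hj]].
    apply in_seq in Hj. exists R0, ys, j, L. repeat split; auto; lia.
  - unfold armF in HF. injection HF as _ ->. destruct Ha as [<-|[<-|[]]].
    + exists R0, ys, j, (s - 1). repeat split; auto; lia.
    + exists R0, ys, j, s. repeat split; auto; lia.
Qed.

Lemma W_ctup I (wfI : wf_inst ar I) a : in_adom (Ip I) a -> W (cty a) = length (ctup a).
Proof.
  intro H. apply adom_Ip in H. destruct H as [R [ys [j [t [Hin [Hj [Ht ->]]]]]]].
  rewrite cty_node, ctup_node. destruct t; [reflexivity|].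
  rewrite W_arm by assumption. symmetry. apply wfI; assumption.
Qed.

Lemma cty_allTypes I (wfI : wf_inst ar I) a : in_adom (Ip I) a -> In (cty a) (allTypes ar l L).
Proof.
  intro H. apply adom_Ip in H. destruct H as [R [ys [j [t [Hin [Hj [Ht ->]]]]]]].
  rewrite cty_node. destruct t as [|t]; [left; reflexivity|]. right.
  apply in_flat_map. exists (idx R). split.
  { apply in_seq. split; [lia|]. simpl. apply nth_error_Some. rewrite idx_spec by assumption. discriminate. }
  apply in_flat_map. exists j. split.
  { apply in_seq. split; [lia|]. unfold maxAr. simpl.
    assert (ar R <= list_max (map ar l)) by (apply in_list_max, in_map, Hl).
    rewrite (wfI R ys Hin) in Hj. lia. }
  apply in_map. apply in_seq. lia.
Qed.

Lemma allLists_in ts : (forall τ, In τ ts -> In τ (allTypes ar l L)) -> In ts (allLists ar l L (length ts)).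
Proof.
  induction ts as [|τ r IH]; intro H; [left; reflexivity|]. change (In (τ :: r) (flat_map (fun a => map (cons a) (allLists ar l L (length r))) (allTypes ar l L))). apply in_flat_map.
  exists τ. split; [apply H; left; reflexivity|]. apply in_map. apply IH. intros; apply H; right; assumption.
Qed.

Lemma sigma_spec vs (f : nat -> ty) x : In x vs -> sigma vs (map f vs) x = f x.
Proof.
  intro H. unfold sigma. destruct (idxOf_spec x vs H) as [H1 H2].
  rewrite (nth_map_any f vs _ Center 0) by assumption. rewrite H2. reflexivity.
Qed.

Lemma Same_derivable I (wfI : wf_inst ar I) c : in_adom I c -> derives G' I SameS [c; c].
Proof.
  intros [R [ys [Hin Hc]]]. destruct (In_nth ys c 0 Hc) as [p [Hp <-]].
  assert (HarR : ar R = length ys) by (symmetry; apply wfI; assumption).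
  set (r0 := mkRule Rel SameS [p; p] [(inl R, seq 0 (ar R))]).
  change (derives G' I (head_rel r0) (map (fun v => nth v ys 0) (head_vars r0))).
  apply (derives_rule G' I r0 (fun v => nth v ys 0)).
  - simpl. apply in_or_app. left. unfold sameRules. apply in_flat_map. exists R. split; [apply Hl|].
    apply (in_map (fun p => mkRule Rel SameS [p; p] [(inl R, seq 0 (ar R))])). apply in_seq. lia.
  - intros R' xs [Hz|[]]. injection Hz as <- <-. rewrite HarR, map_nth_seq_id. exact Hin.
  - intros P xs [Hz|[]]. discriminate.
Qed.

Lemma complete I (wfI : wf_inst ar I) P args : derives G (Ip I) P args ->
  (forall a, In a args -> in_adom (Ip I) a) /\
  derives G' I (sym P (map cty args)) (flat_map ctup args).
Proof.
  intro H. induction H as [r nu Hr HE HI IH].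
  assert (Hat : forall s xs x, In (s, xs) (body r) -> In x xs -> in_adom (Ip I) (nu x)).
  { intros [R|Q] xs x Hs Hx.
    - exists R, (map nu xs). split; [apply HE; assumption|apply in_map; assumption].
    - apply (IH Q xs Hs). apply in_map; assumption. }
  assert (Hvar : forall x, In x (vars r) -> in_adom (Ip I) (nu x)).
  { intros x Hx. unfold vars in Hx. apply in_app_or in Hx. destruct Hx as [Hx|Hx].
    - destruct wfG as [_ W']. destruct (W' r Hr) as [_ [_ [_ W4]]].
      destruct (W4 x Hx) as [s [xs [Hs Hx']]]. eapply Hat; eassumption.
    - apply in_flat_map in Hx. destruct Hx as [[s xs] [Hs Hx]]. eapply Hat; eassumption. }
  split.
  { intros a Ha. apply in_map_iff in Ha. destruct Ha as [x [<- Hx]]. apply Hvar.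
    unfold vars. apply in_or_app. left; assumption. }
  set (vs := vars r). set (ts := map (fun x => cty (nu x)) vs). set (σ := sigma vs ts).
  assert (Hσ : forall x, In x vs -> σ x = cty (nu x)) by (intros x Hx; unfold σ, ts; apply (sigma_spec vs (fun x => cty (nu x))); assumption).
  set (nu' := fun v => match dec1 v with [x; k] => nth k (ctup (nu x)) 0 | _ => 0 end).
  assert (Hnu' : forall x k, nu' (vc x k) = nth k (ctup (nu x)) 0) by (intros; unfold nu'; rewrite vc_dec; reflexivity).
  assert (Htv : forall x, In x vs -> map nu' (tv x (σ x)) = ctup (nu x)).
  { intros x Hx. rewrite Hσ by assumption. unfold Submission.tv. rewrite map_map.
    erewrite map_ext by (intro; apply Hnu'). rewrite (W_ctup I wfI) by (apply Hvar; assumption).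
    apply map_nth_seq_id. }
  assert (Hbody : forall s xs x, In (s, xs) (body r) -> In x xs -> In x vs).
  { intros s xs x Hs Hx. unfold vs, vars. apply in_or_app. right. apply in_flat_map. exists (s, xs). auto. }
  assert (Hflat : forall xs, (forall x, In x xs -> In x vs) ->
            map nu' (flat_map (fun x => tv x (σ x)) xs) = flat_map ctup (map nu xs) /\
            map σ xs = map cty (map nu xs)).
  { intros xs Hxs. split.
    - rewrite map_flat_map, flat_map_map'. apply flat_map_ext_in. intros x Hx. apply Htv, Hxs, Hx.
    - rewrite map_map. apply map_ext_in. intros x Hx. apply Hσ, Hxs, Hx. }
  set (Pr := fun z : (Rel + nat) * list nat => match z with
             | (inl R, zs) => In (R, map nu' zs) I
             | (inr Q, zs) => derives G' I Q (map nu' zs) end).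
  destruct (trBody_complete ar eqR l Rdec L σ (body r) Pr) as [b [Eb Pb]].
  { intros [[R|Q] xs] Ha.
    - destruct (EDB_complete ar eqR l Rdec L Hl HL I wfI nu nu' σ R xs Hnu' (HE R xs Ha))
        as [u [Hu [HuE HuI]]].
      { intros x Hx. apply Hσ. eapply Hbody; eassumption. }
      exists u. split; [exact Hu|]. intros [[R'|Q'] zs] Hz; simpl.
      + apply HuE; assumption.
      + destruct (HuI Q' zs Hz) as [a [-> [-> Ha']]]. apply Same_derivable; assumption.
    - eexists. split; [reflexivity|]. intros z [<-|[]]. simpl.
      destruct (Hflat xs) as [F1 F2]; [intros; eapply Hbody; eassumption|].
      rewrite F1, F2. apply (IH Q xs Ha). }
  set (r' := mkRule Rel (sym (head_rel r) (map σ (head_vars r))) (flat_map (fun x => tv x (σ x)) (head_vars r)) b).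
  assert (Htr : trRule ar eqR l Rdec L r ts = Some r') by (unfold trRule; fold vs; fold σ; rewrite Eb; reflexivity).
  assert (Hr' : In r' (rules G')).
  { simpl. apply in_or_app. right. unfold trRules. apply in_flat_map. exists r. split; [assumption|].
    apply in_flat_map. exists ts. split.
    - fold vs. replace (length vs) with (length ts) by (unfold ts; apply length_map).
      apply allLists_in. intros τ Hτ. unfold ts in Hτ. apply in_map_iff in Hτ.
      destruct Hτ as [x [<- Hx]]. apply (cty_allTypes I wfI). apply Hvar. assumption.
    - rewrite Htr. left; reflexivity. }
  destruct (Hflat (head_vars r)) as [F1 F2].
  { intros x Hx. unfold vs, vars. apply in_or_app. left; assumption. }
  rewrite <- F1, <- F2.
  change (derives G' I (head_rel r') (map nu' (head_vars r'))).
  apply (derives_rule G' I r' nu'); [assumption| |].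
  - intros R zs Hz. apply (Pb _ Hz).
  - intros Q zs Hz. apply (Pb _ Hz).
Qed.
End Comp2.

Lemma inr_inj' {A B} (a b : B) : @inr A B a = inr b -> a = b.
Proof. intro H. injection H. auto. Qed.

Section WF.
Context {Rel : Type}.
Variable ar : Rel -> nat.
Variable eqR : Rel.
Variable l : list Rel.
Variable Rdec : forall x y : Rel, {x = y} + {x <> y}.
Variable L : nat.
Variable G : program Rel.
Hypothesis Hl : forall R, In R l.
Hypothesis HL : 1 <= L.
Hypothesis wfG : wf_program ar G.

Notation W := (W ar l).
Notation tv := (tv ar l).
Notation G' := (G' ar eqR l Rdec L G).

Lemma trBody_back σ b u : trBody ar eqR l Rdec L σ b = Some u ->
  forall z, In z u -> exists a v, In a b /\ trAtom ar eqR l Rdec L σ a = Some v /\ In z v.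
Proof.
  revert u; induction b as [|a0 r IH]; intros u H z Hz.
  - injection H as <-. destruct Hz.
  - simpl in H. destruct (trAtom ar eqR l Rdec L σ a0) eqn:E1; [|discriminate].
    destruct (trBody ar eqR l Rdec L σ r) eqn:E2; [|discriminate]. injection H as <-.
    apply in_app_or in Hz. destruct Hz as [Hz|Hz].
    + exists a0, l0. split; [left; reflexivity|]. auto.
    + destruct (IH l1 eq_refl z Hz) as [a [v [Ha [Hv Hzv]]]]. exists a, v. split; [right; assumption|]. auto.
Qed.

Lemma trEDB_shape σ R xs u : trEDB ar eqR l Rdec L σ R xs = Some u ->
  forall z, In z u -> (exists R' zs, z = (inl R', zs) /\ length zs = ar R') \/ (exists a b, z = SameA a b).
Proof.
  intros Hu z Hz. unfold trEDB in Hu.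
  destruct (list_eq_dec ty_dec _ _) as [Hm|Hm].
  - injection Hu as <-. destruct Hz as [<-|Hz].
    + left. eexists; eexists; split; [reflexivity|]. rewrite length_map, length_seq. reflexivity.
    + right. apply in_flat_map in Hz. destruct Hz as [x [_ Hz]]. apply in_map_iff in Hz.
      destruct Hz as [p [<- _]]. eauto.
  - destruct (Rdec R eqR); [|discriminate].
    destruct xs as [|x [|y [|? ?]]]; try discriminate.
    destruct (σ y) as [|i j t]; try discriminate.
    destruct (nth_error l i) as [Ri|]; try discriminate.
    destruct (_ && _); [|discriminate].
    destruct (t =? 1).
    + destruct (ty_dec _ _); [|discriminate]. injection Hu as <-.
      destruct Hz as [<-|[<-|[]]].
      * left. eexists; eexists; split; [reflexivity|]. rewrite length_map, length_seq. reflexivity.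
      * right. eauto.
    + destruct (ty_dec _ _); [|discriminate]. injection Hu as <-.
      destruct Hz as [<-|Hz].
      * left. eexists; eexists; split; [reflexivity|]. rewrite length_map, length_seq. reflexivity.
      * right. apply in_map_iff in Hz. destruct Hz as [p [<- _]]. eauto.
Qed.

Lemma trEDB_cover σ R xs u x v : trEDB ar eqR l Rdec L σ R xs = Some u ->
  In x xs -> In v (tv x (σ x)) -> exists s zs, In (s, zs) u /\ In v zs.
Proof.
  intros Hu Hx Hv. unfold trEDB in Hu. unfold Submission.tv in Hv. apply in_map_iff in Hv.
  destruct Hv as [p [<- Hp]]. apply in_seq in Hp.
  destruct (list_eq_dec ty_dec _ _) as [Hm|Hm].
  - injection Hu as <-.
    assert (Hσx : In (σ x) (map (fun m => Arm (idx l Rdec R) m L) (seq 0 (length xs)))).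
    { rewrite <- Hm. apply in_map; assumption. }
    apply in_map_iff in Hσx. destruct Hσx as [m [Em _]]. rewrite <- Em in Hp.
    rewrite W_arm in Hp by assumption.
    exists (inr SameS), [vc x p; vc (nth 0 xs 0) p]. split; [|left; reflexivity].
    right. apply in_flat_map. exists x. split; [assumption|].
    apply (in_map (fun p => SameA (vc x p) (vc (nth 0 xs 0) p))). apply in_seq. lia.
  - destruct (Rdec R eqR); [|discriminate].
    destruct xs as [|x0 [|y [|? ?]]]; try discriminate.
    destruct (σ y) as [|i j t] eqn:Ey; try discriminate.
    destruct (nth_error l i) as [Ri|] eqn:Ei; try discriminate.
    destruct (_ && _); [|discriminate].
    destruct Hx as [->|[->|[]]].
    + destruct (t =? 1).
      * destruct (ty_dec (σ x) Center) as [Ex|]; [|discriminate]. injection Hu as <-.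
        rewrite Ex in Hp. simpl in Hp. assert (p = 0) by lia. subst p.
        exists (inr SameS), [vc y j; vc x 0]. split; [right; left; reflexivity|right; left; reflexivity].
      * destruct (ty_dec (σ x) (Arm i j (t - 1))) as [Ex|]; [|discriminate]. injection Hu as <-.
        rewrite Ex in Hp. simpl in Hp. rewrite Ei in Hp.
        exists (inr SameS), [vc x p; vc y p]. split; [|left; reflexivity].
        right. apply (in_map (fun p => SameA (vc x p) (vc y p))). apply in_seq. lia.
    + rewrite Ey in Hp. simpl in Hp. rewrite Ei in Hp.
      destruct (t =? 1).
      * destruct (ty_dec _ _); [|discriminate]. injection Hu as <-.
        eexists; eexists. split; [left; reflexivity|]. apply in_map, in_seq. lia.
      * destruct (ty_dec _ _); [|discriminate]. injection Hu as <-.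
        eexists; eexists. split; [left; reflexivity|]. apply in_map, in_seq. lia.
Qed.

Lemma wf_G' : wf_program ar G'.
Proof.
  destruct wfG as [Wg Wr]. split.
  { simpl. rewrite idb'_sym. reflexivity. }
  intros r' Hr'. apply in_G'_rules in Hr'; [|assumption].
  destruct Hr' as [[R [p [HR [Hp ->]]]]|[r [ts [Hr Htr]]]].
  - simpl. split; [rewrite idb'_Same; reflexivity|]. split; [|split].
    + intros s xs [Hz|[]]. injection Hz as <- <-. simpl. rewrite length_seq. reflexivity.
    + intros s xs [Hz|[]]. injection Hz as <- <-. discriminate.
    + intros x Hx. exists (inl R), (seq 0 (ar R)). split; [left; reflexivity|].
      destruct Hx as [<-|[<-|[]]]; apply in_seq; lia.
  - unfold trRule in Htr. set (σ := sigma (vars r) ts) in *.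
    destruct (trBody ar eqR l Rdec L σ (body r)) as [b|] eqn:Eb; [|discriminate].
    injection Htr as <-. destruct (Wr r Hr) as [W1 [W2 [W3 W4]]]. simpl. split; [|split; [|split]].
    + rewrite length_flat_tv, idb'_sym. reflexivity.
    + intros s zs Hz. destruct (trBody_back σ _ _ Eb _ Hz) as [[[R|P] xs] [v [Ha [Hv Hzv]]]].
      * simpl in Hv. destruct (trEDB_shape σ R xs v Hv _ Hzv) as [[R' [zs' [E1 E2]]]|[a [b' E1]]].
        -- injection E1 as -> ->. exact E2.
        -- injection E1 as -> ->. simpl. rewrite idb'_Same. reflexivity.
      * simpl in Hv. injection Hv as <-. destruct Hzv as [E|[]]. injection E as <- <-.
        simpl. rewrite length_flat_tv, idb'_sym. reflexivity.
    + intros s zs Hz. destruct (trBody_back σ _ _ Eb _ Hz) as [[[R|P] xs] [v [Ha [Hv Hzv]]]].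
      * simpl in Hv. destruct (trEDB_shape σ R xs v Hv _ Hzv) as [[R' [zs' [E1 E2]]]|[a [b' E1]]].
        -- injection E1 as -> ->. discriminate.
        -- injection E1 as -> ->. simpl. intro E. apply inr_inj' in E. symmetry in E. apply sym_Same in E. exact E.
      * simpl in Hv. injection Hv as <-. destruct Hzv as [E|[]]. injection E as <- <-.
        simpl. intro E. apply inr_inj' in E. apply sym_inj in E. destruct E as [E _].
        apply (W3 (inr P) xs Ha). rewrite E. reflexivity.
    + intros v Hv. apply in_flat_map in Hv. destruct Hv as [x [Hx Hv]].
      destruct (W4 x Hx) as [[R|P] [xs [Ha Hxa]]].
      * destruct (trBody_sound ar eqR l Rdec L σ _ _ Eb _ Ha) as [u [Hu Hinc]].
        simpl in Hu. destruct (trEDB_cover σ R xs u x v Hu Hxa Hv) as [s' [zs [Hz Hvz]]].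
        exists s', zs. split; [apply Hinc; assumption|assumption].
      * destruct (trBody_sound ar eqR l Rdec L σ _ _ Eb _ Ha) as [u [Hu Hinc]].
        simpl in Hu. injection Hu as <-.
        eexists; eexists. split; [apply Hinc; left; reflexivity|].
        apply in_flat_map. exists x. split; assumption.
Qed.
End WF.

Theorem lemma6p2 (Rel : Type) (ar : Rel -> nat) (eqR : Rel)
  (Hfin : exists l : list Rel, forall R, In R l)
  (Heq : ar eqR = 2)
  (S : list (instance Rel))
  (HS : forall T, In T S -> wf_inst ar T /\ has_equality eqR T)
  (g : nat) :
  DLog_rewritable_girth ar S g -> DLog_rewritable ar S.
Proof.
  intros [G [wfG HG]]. destruct Hfin as [l Hl].
  set (Rdec := fun x y : Rel => excluded_middle_informative (x = y)).
  assert (HL : 1 <= Datatypes.S g) by lia.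
  assert (HSe : forall T, In T S -> has_equality eqR T) by (intros T HT; apply HS, HT).
  exists (G' ar eqR l Rdec (Datatypes.S g) G). split.
  { apply wf_G'; assumption. }
  intros I wfI. unfold models. split.
  - intro H. apply (sound ar eqR l Rdec (Datatypes.S g) G Hl HL wfG) in H.
    destruct H as [_ H]. specialize (H (goal G) [] eq_refl). simpl in H.
    apply (coCSP_Ip ar eqR l Rdec (Datatypes.S g) HL Heq S I HSe).
    apply HG; [apply wf_Ip; assumption|apply girth_Ip; auto|exact H].
  - intro H. apply (coCSP_Ip ar eqR l Rdec (Datatypes.S g) HL Heq S I HSe) in H.
    apply HG in H; [|apply wf_Ip; assumption|apply girth_Ip; auto].
    apply (complete ar eqR l Rdec (Datatypes.S g) G Hl HL wfG I wfI) in H.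
    destruct H as [_ H]. exact H.
Qed.
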